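(* There is a single algorithm such that for every code $f$ of a Suslin set $P[f]\subseteq X$, the characteristic function of $P[f]$ is computable in $\mathbf S$ and $f$ via this algorithm; i.e. there is an index $e$ with $\{e\}(\mathbf S,f,x)=1$ if $x\in P[f]$ and $=0$ if $x\notin P[f]$, for all codes $f$ and all $x\in X$.
   Context: The Suslin functional $\mathbf S$ is the type-2 functional with $\mathbf S(g)=0$ if $\forall f\in\mathbb N^{\mathbb N}\exists n\,(g(\bar f(n))=0)$ and $\mathbf S(g)=1$ if $\exists f\in\mathbb N^{\mathbb N}\forall n\,(g(\bar f(n))>0)$, where $\bar f(n)=\langle f(0),\dots,f(n-1)\rangle$. Computability is Kleene computability (S1–S9). Suslin sets and their codes: $\mathrm{SEQ}$ finite sequences of naturals; a Suslin scheme is $s\mapsto P_s\subseteq X$ on $\mathrm{SEQ}$, $\mathbf A(\mathbf P)=\bigcup_{f}\bigcap_n P_{\bar f(n)}$; $\Sigma_0$ clopen sets, $\Sigma_\alpha$ ($\alpha>0$) sets $\mathbf A(\mathbf P)$ with each $P_s\in\Pi_\beta$, $\beta<\alpha$; $\Pi_\alpha$ complements; Suslin sets are the members of $\bigcup_{\alpha<\omega_1}\Sigma_\alpha$. A code is a function $f\in\mathbb N^{\mathbb N}$ coding a well-founded labelled tree (leaves code clopen sets, inner nodes denote complement or application of $\mathbf A$ to the scheme of sets coded by children indexed by $\mathrm{SEQ}$); $P[f]$ is the coded set. $X$ is a product of copies of $\mathbb N^{\mathbb N}$, $\{0,1\}^{\mathbb N}$, $\mathbb N$. *)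

(* Defs.v *)
From mathcomp Require Import all_boot.
From Stdlib Require Import ClassicalEpsilon.
Set Implicit Arguments. Unset Strict Implicit. Unset Printing Implicit Defensive.

Definition seqcode (s : seq nat) : nat := CodeSeq.code s.
Definition sequncode (n : nat) : seq nat := CodeSeq.decode n.

Definition fbar (f : nat -> nat) (n : nat) : seq nat := mkseq f n.

Definition SuslinS (g : nat -> nat) : nat :=
  if excluded_middle_informative
       (forall f : nat -> nat, exists n, g (seqcode (fbar f n)) = 0)
  then 0 else 1.

Inductive obj : Type :=
| O0 of nat
| O1 of (nat -> nat)
| O2 of ((nat -> nat) -> nat).

Inductive kind := KN | KBaire | KCantor.
Definition space := seq kind.

Definition in_kind (k : kind) (o : obj) : Prop :=
  match k, o with
  | KN, O0 _ => True
  | KBaire, O1 _ => True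
  | KCantor, O1 g => forall n, g n <= 1
  | _, _ => False
  end.

Fixpoint in_space (X : space) (x : seq obj) : Prop :=
  match X, x with
  | [::], [::] => True
  | k :: X', o :: x' => in_kind k o /\ in_space X' x'
  | _, _ => False
  end.

Inductive scheme :=
| Sc1
| Sc2 of nat
| Sc3
| Sc4 of nat & nat
| Sc5 of nat & nat
| Sc6 of nat & nat
| Sc7
| Sc8 of nat
| Sc9 of nat.

Definition decode_index (e : nat) : option scheme :=
  match sequncode e with
  | [:: 0] => Some Sc1
  | [:: 1; q] => Some (Sc2 q)
  | [:: 2] => Some Sc3
  | [:: 3; e1; e2] => Some (Sc4 e1 e2)
  | [:: 4; e1; e2] => Some (Sc5 e1 e2)
  | [:: 5; k; e1] => Some (Sc6 k e1)
  | [:: 6] => Some Sc7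
  | [:: 7; e1] => Some (Sc8 e1)
  | [:: 8; m] => Some (Sc9 m)
  | _ => None
  end.

Definition swap_at (k : nat) (xs : seq obj) : seq obj :=
  take k xs ++ (nth (O0 0) xs k.+1 :: nth (O0 0) xs k :: drop k.+2 xs).

(* Comp e xs n  :<->  {e}(xs) = n  (Kleene's inductive definition) *)
Inductive Comp : nat -> seq obj -> nat -> Prop :=
| C1 e n xs : decode_index e = Some Sc1 -> Comp e (O0 n :: xs) n.+1
| C2 e q xs : decode_index e = Some (Sc2 q) -> Comp e xs q
| C3 e n xs : decode_index e = Some Sc3 -> Comp e (O0 n :: xs) n
| C4 e e1 e2 xs m n : decode_index e = Some (Sc4 e1 e2) ->
    Comp e2 xs m -> Comp e1 (O0 m :: xs) n -> Comp e xs n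
| C5a e e1 e2 xs n : decode_index e = Some (Sc5 e1 e2) ->
    Comp e1 xs n -> Comp e (O0 0 :: xs) n
| C5b e e1 e2 xs m r n : decode_index e = Some (Sc5 e1 e2) ->
    Comp e (O0 m :: xs) r -> Comp e2 (O0 r :: O0 m :: xs) n ->
    Comp e (O0 m.+1 :: xs) n
| C6 e k e1 xs n : decode_index e = Some (Sc6 k e1) -> k.+1 < size xs ->
    Comp e1 (swap_at k xs) n -> Comp e xs n
| C7 e f m xs : decode_index e = Some Sc7 -> Comp e (O1 f :: O0 m :: xs) (f m)
| C8 e e1 F xs (g : nat -> nat) : decode_index e = Some (Sc8 e1) ->
    (forall m, Comp e1 (O2 F :: O0 m :: xs) (g m)) ->
    Comp e (O2 F :: xs) (F g)
| C9 e m a ys xs n : decode_index e = Some (Sc9 m) -> size ys = m ->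
    Comp a ys n -> Comp e (O0 a :: ys ++ xs) n.

(* Leaves code basic clopen sets: the leaf number c decodes to a list of
   constraints, the i-th one (a finite sequence s) restricting coordinate i:
   for an N-coordinate, s = [::] (no constraint) or x_i = head s;
   for a function coordinate, s is an initial segment of x_i. *)
Definition basic_set (c : nat) (x : seq obj) : Prop :=
  let cs := map sequncode (sequncode c) in
  forall i, i < size cs -> i < size x ->
    let s := nth [::] cs i in
    match nth (O0 0) x i with
    | O0 n => s = [::] \/ n = head 0 s
    | O1 g => s = mkseq g (size s)
    | O2 _ => False
    end.

Definition Aop (P : seq nat -> seq obj -> Prop) (x : seq obj) : Prop :=
  exists g : nat -> nat, forall n, P (fbar g n) x.

(* Node s of the tree coded by f carries label f <s>:
     f <s> = 3c     : leaf, the basic clopen set coded by c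
     f <s> = 3c + 1 : complement of the set coded at s ++ [0]
     f <s> = 3c + 2 : A applied to the scheme t |-> set coded at s ++ [<t>].
   Interp f s Q : the (well-founded) subtree of f at s codes the set Q.
   f is a code iff Interp f [::] Q for some Q, and then P[f] = Q. *)
Inductive Interp (f : nat -> nat) : seq nat -> (seq obj -> Prop) -> Prop :=
| I_leaf s : f (seqcode s) %% 3 = 0 ->
    Interp f s (basic_set (f (seqcode s) %/ 3))
| I_compl s Q : f (seqcode s) %% 3 = 1 ->
    Interp f (rcons s 0) Q -> Interp f s (fun x => ~ Q x)
| I_A s (P : seq nat -> seq obj -> Prop) : f (seqcode s) %% 3 = 2 ->
    (forall t, Interp f (rcons s (seqcode t)) (P t)) -> Interp f s (Aop P).

Definition is_code (f : nat -> nat) : Prop := exists Q, Interp f [::] Q.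

(* Main.v *)
Require Import Defs.
From mathcomp Require Import all_boot.
From Stdlib Require Import ClassicalEpsilon.
From mathcomp Require Import zify.
Set Implicit Arguments. Unset Strict Implicit. Unset Printing Implicit Defensive.

Definition iS1 := seqcode [:: 0].
Definition iconst q := seqcode [:: 1; q].
Definition iS3 := seqcode [:: 2].
Definition i4 e1 e2 := seqcode [:: 3; e1; e2].
Definition i5 e1 e2 := seqcode [:: 4; e1; e2].
Definition i6 k e1 := seqcode [:: 5; k; e1].
Definition iS7 := seqcode [:: 6].
Definition i8 e1 := seqcode [:: 7; e1].
Definition i9 m := seqcode [:: 8; m].

Lemma dec_code l : sequncode (seqcode l) = l.
Proof. exact: CodeSeq.codeK. Qed.

Ltac dec := rewrite /decode_index ?dec_code.

Lemma c_S1 n xs : Comp iS1 (O0 n :: xs) n.+1.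
Proof. apply: C1; by dec. Qed.
Lemma c_const q xs : Comp (iconst q) xs q.
Proof. apply: C2; by dec. Qed.
Lemma c_S3 n xs : Comp iS3 (O0 n :: xs) n.
Proof. apply: C3; by dec. Qed.
Lemma c_4 e1 e2 xs m n : Comp e2 xs m -> Comp e1 (O0 m :: xs) n -> Comp (i4 e1 e2) xs n.
Proof. apply: C4; by dec. Qed.
Lemma c_S7 g m xs : Comp iS7 (O1 g :: O0 m :: xs) (g m).
Proof. apply: C7; by dec. Qed.
Lemma c_8 e1 F xs (g : nat -> nat) :
  (forall m, Comp e1 (O2 F :: O0 m :: xs) (g m)) -> Comp (i8 e1) (O2 F :: xs) (F g).
Proof. apply: C8; by dec. Qed.
Lemma c_9 m a ys xs n : size ys = m -> Comp a ys n -> Comp (i9 m) (O0 a :: ys ++ xs) n.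
Proof. apply: C9; by dec. Qed.
Lemma c_9' m a ys n : size ys = m -> Comp a ys n -> Comp (i9 m) (O0 a :: ys) n.
Proof. move=> H1 H2; rewrite -[ys]cats0; exact: c_9. Qed.

Lemma c_5 e1 e2 xs (R : nat -> nat) N :
  Comp e1 xs (R 0) -> (forall m, m < N -> Comp e2 (O0 (R m) :: O0 m :: xs) (R m.+1)) ->
  forall m, m <= N -> Comp (i5 e1 e2) (O0 m :: xs) (R m).
Proof.
move=> H0 HS; elim=> [|m IH] Hm; first by apply: C5a; first by dec.
by apply: C5b (IH (ltnW Hm)) (HS m Hm); dec.
Qed.

Lemma swap_cat pre a b post :
  swap_at (size pre) (pre ++ a :: b :: post) = pre ++ b :: a :: post.
Proof. by elim: pre => [|x pre]; rewrite /swap_at /= ?drop0 // => ->. Qed.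

Fixpoint imove i e := if i is i'.+1 then i6 i' (imove i' e) else e.

Lemma c_move_cat i pre a post e n : size pre = i ->
  Comp e (a :: pre ++ post) n -> Comp (imove i e) (pre ++ a :: post) n.
Proof.
elim: i pre a post e n => [|i IH] pre a post e n.
  by case: pre => // _.
case/lastP: pre => [//|pre p]; rewrite size_rcons => -[Hs] H.
rewrite /=; apply: C6; first by dec.
  by rewrite size_cat /= size_rcons; lia.
rewrite -cats1 -catA /= -Hs swap_cat.
rewrite Hs; apply: IH => //; by rewrite -cats1 -catA in H.
Qed.

Lemma c_move i xs e n : i < size xs ->
  Comp e (nth (O0 0) xs i :: take i xs ++ drop i.+1 xs) n -> Comp (imove i e) xs n.
Proof.
move=> Hi H; rewrite -(cat_take_drop i xs) (drop_nth (O0 0)) ?Hi //.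
apply: c_move_cat => //; by rewrite size_take Hi.
Qed.

Definition irot p k e := iter k (imove (p + k - 1)) e.

Lemma c_rot P T e n : Comp e (T ++ P) n ->
  Comp (irot (size P) (size T) e) (P ++ T) n.
Proof.
move=> H.
have key : forall j, j <= size T ->
  Comp (iter j (imove (size P + size T - 1)) e) (drop j T ++ P ++ take j T) n.
  elim=> [|j IH] Hj; first by rewrite drop0 take0 cats0.
  rewrite iterS.
  have Hj' : j < size T by [].
  rewrite (take_nth (O0 0)) // -cats1 !catA.
  apply: c_move_cat.
    by rewrite !size_cat size_drop size_take Hj'; lia.
  rewrite cats0 -catA -cat_cons -(drop_nth (O0 0)) //; apply: IH; lia.
have := key (size T) (leqnn _); by rewrite drop_size take_size.
Qed.

(* ---------- a small language of numeric expressions (de Bruijn levels) ---------- *)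
Inductive nexp :=
| NV of nat | NC of nat | NS of nexp | NApp of nat & nexp
| NLet of nexp & nexp | NRec of nexp & nexp & nexp.

Definition numv (renv : seq obj) l :=
  if nth (O0 0) renv l is O0 n then n else 0.
Definition funv (renv : seq obj) l :=
  if nth (O0 0) renv l is O1 g then g else fun _ => 0.

Fixpoint nrec (a : nat) (F : nat -> nat -> nat) (m : nat) : nat :=
  if m is m'.+1 then F m' (nrec a F m') else a.

Lemma nrecS a F k : nrec a F k.+1 = F k (nrec a F k). Proof. by []. Qed.

Fixpoint eval (renv : seq obj) (t : nexp) {struct t} : nat :=
  match t with
  | NV l => numv renv l
  | NC q => q
  | NS t => (eval renv t).+1
  | NApp l t => funv renv l (eval renv t)
  | NLet t u => eval (rcons renv (O0 (eval renv t))) u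
  | NRec t0 ts tn => nrec (eval renv t0)
       (fun m r => eval (rcons (rcons renv (O0 m)) (O0 r)) ts) (eval renv tn)
  end.

Fixpoint wf (renv : seq obj) (t : nexp) {struct t} : Prop :=
  match t with
  | NV l => exists n, nth (O1 (fun _ => 0)) renv l = O0 n
  | NC q => True
  | NS t => wf renv t
  | NApp l t => (exists g, nth (O0 0) renv l = O1 g) /\ wf renv t
  | NLet t u => wf renv t /\ wf (rcons renv (O0 (eval renv t))) u
  | NRec t0 ts tn => wf renv t0 /\ wf renv tn /\
       (forall m, m < eval renv tn -> wf (rcons (rcons renv (O0 m)) (O0 (nrec (eval renv t0)
       (fun m r => eval (rcons (rcons renv (O0 m)) (O0 r)) ts) m))) ts)
  end.

Fixpoint cmp (n : nat) (t : nexp) : nat :=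
  match t with
  | NV l => imove (n.-1 - l) iS3
  | NC q => iconst q
  | NS t => i4 iS1 (cmp n t)
  | NApp l t => i4 (imove (n - l) iS7) (cmp n t)
  | NLet t u => i4 (cmp n.+1 u) (cmp n t)
  | NRec t0 ts tn => i4 (i5 (cmp n t0) (cmp n.+2 ts)) (cmp n tn)
  end.

Lemma cmp_ok t renv : wf renv t -> Comp (cmp (size renv) t) (rev renv) (eval renv t).
Proof.
elim: t renv => [l|q|t IH|l t IH|t IHt u IHu|t0 IH0 ts IHs tn IHn] renv /=.
- case=> k Hk.
  have Hl : l < size renv.
    by move: Hk; case: ltnP => // H; rewrite nth_default.
  apply: c_move; first by rewrite size_rev; lia.
  rewrite nth_rev; last by lia.
  have -> : size renv - ((size renv).-1 - l).+1 = l by lia.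
  rewrite (set_nth_default (O1 (fun _ => 0))) // Hk /numv.
  rewrite (set_nth_default (O1 (fun _ => 0))) // Hk.
  exact: c_S3.
- move=> _; exact: c_const.
- move=> H; apply: c_4 (IH _ H) _; exact: c_S1.
- case=> -[g Hg] H; apply: c_4 (IH _ H) _.
  have Hl : l < size renv.
    by move: Hg; case: ltnP => // H'; rewrite nth_default.
  apply: c_move => /=; first by rewrite size_rev; lia.
  have -> : size renv - l = (size renv - l.+1).+1 by lia.
  rewrite /= nth_rev; last by lia.
  have -> : size renv - (size renv - l.+1).+1 = l by lia.
  rewrite Hg /funv Hg; exact: c_S7.
- case=> Ht Hu; apply: c_4 (IHt _ Ht) _.
  have := IHu _ Hu; by rewrite size_rcons rev_rcons.
- case=> H0 [Hn Hs]; apply: c_4 (IHn _ Hn) _.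
  apply: (c_5 (N := eval renv tn)) => //; first exact: IH0.
  move=> m Hm; have := IHs _ (Hs m Hm).
  by rewrite !size_rcons !rev_rcons.
Qed.

Definition ev renv t v := wf renv t /\ eval renv t = v.
Definition vat (renv : seq obj) l k := nth (O1 (fun _ => 0)) renv l = O0 k.
Definition ext (s : seq obj) m r := rcons (rcons s (O0 m)) (O0 r).

Lemma vat_lt s l k : vat s l k -> l < size s.
Proof. by rewrite /vat; case: ltnP => // H; rewrite nth_default. Qed.
Lemma vat_rcons s l k v : vat s l k -> vat (rcons s v) l k.
Proof. move=> H; rewrite /vat nth_rcons (vat_lt H); exact: H. Qed.
Lemma vat_last s k : vat (rcons s (O0 k)) (size s) k.
Proof. by rewrite /vat nth_rcons ltnn eqxx. Qed.
Lemma vat_lastn s n k : size s = n -> vat (rcons s (O0 k)) n k.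
Proof. move=> <-; exact: vat_last. Qed.
Lemma vat_lastn' s n k k' : size s = n -> k = k' -> vat (rcons s (O0 k)) n k'.
Proof. move=> <- <-; exact: vat_last. Qed.
Lemma vat_e1 s n m r : size s = n -> vat (ext s m r) n m.
Proof. move=> <-; rewrite /ext; apply: vat_rcons; exact: vat_last. Qed.
Lemma vat_e2 s n m r : size s = n -> vat (ext s m r) n.+1 r.
Proof. move=> <-; rewrite /ext -(size_rcons s (O0 m)); exact: vat_last. Qed.
Lemma vat_ext s l k m r : vat s l k -> vat (ext s m r) l k.
Proof. by move=> H; rewrite /ext; do 2 apply: vat_rcons. Qed.
Lemma size_ext s m r : size (ext s m r) = (size s).+2.
Proof. by rewrite /ext !size_rcons. Qed.

Lemma ev_ok renv t v : ev renv t v -> Comp (cmp (size renv) t) (rev renv) v.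
Proof. by case=> H <-; exact: cmp_ok. Qed.

Lemma ev_V renv l k : vat renv l k -> ev renv (NV l) k.
Proof.
move=> H; split; first by exists k.
rewrite /= /numv (set_nth_default (O1 (fun _ => 0))) ?(vat_lt H) //; by rewrite H.
Qed.
Lemma ev_C renv q : ev renv (NC q) q.
Proof. by []. Qed.
Lemma ev_S renv t v : ev renv t v -> ev renv (NS t) v.+1.
Proof. by case=> H1 H2; split => //=; rewrite H2. Qed.
Lemma ev_App renv l g t v : nth (O0 0) renv l = O1 g -> ev renv t v ->
  ev renv (NApp l t) (g v).
Proof. by move=> Hg [H1 H2]; split => //=; [split=> //; exists g | rewrite /funv Hg H2]. Qed.
Lemma ev_Let renv t u v w : ev renv t v -> ev (rcons renv (O0 v)) u w ->
  ev renv (NLet t u) w.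
Proof. by case=> H1 H2 [H3 H4]; split => /=; rewrite H2. Qed.
Lemma ev_Rec renv t0 ts tn a N (F : nat -> nat -> nat) :
  ev renv t0 a -> ev renv tn N ->
  (forall m r, m < N -> ev (ext renv m r) ts (F m r)) ->
  ev renv (NRec t0 ts tn) (nrec a F N).
Proof.
case=> H1 H2 [H3 H4] H.
set G := (fun m r => eval (rcons (rcons renv (O0 m)) (O0 r)) ts).
have E : forall m, m <= N -> nrec (eval renv t0) G m = nrec a F m.
  elim=> [|m IH] Hm /=; first by [].
  rewrite IH ?(ltnW Hm) //; by case: (H m (nrec a F m) Hm).
split => /=; last by rewrite H4 -/G E.
split=> //; split=> // m; rewrite H4 => Hm; rewrite -/G E ?(ltnW Hm) //.
by case: (H m (nrec a F m) Hm).
Qed.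

Lemma ev_conv renv t v w : v = w -> ev renv t v -> ev renv t w.
Proof. by move=> ->. Qed.

Definition add n i j := NRec (NV i) (NS (NV n.+1)) (NV j).
Definition mul n i j := NRec (NC 0) (add n.+2 n.+1 i) (NV j).
Definition pow2 n i := NRec (NC 1) (add n.+2 n.+1 n.+1) (NV i).
Definition pred n i := NRec (NC 0) (NV n) (NV i).
Definition sub n i j := NRec (NV i) (pred n.+2 n.+1) (NV j).
Definition case3 n j a b c := NRec (NC a) (NRec (NC b) (NC c) (NV n)) (NV j).
Definition eqb n i j :=
  NLet (sub n i j) (NLet (sub n.+1 j i) (NLet (add n.+2 n n.+1) (case3 n.+3 n.+2 1 0 0))).
Definition bsum n j body := NRec (NC 0) (NLet body (add n.+3 n.+1 n.+2)) (NV j).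

Lemma ev_add renv n i j a b : size renv = n -> vat renv i a -> vat renv j b ->
  ev renv (add n i j) (a + b).
Proof.
move=> Hn Ha Hb.
have -> : a + b = nrec a (fun _ r => r.+1) b.
  by elim: b {Hb} => [|b IH] /=; [rewrite addn0 | rewrite -IH addnS].
apply: ev_Rec; [exact: ev_V | exact: ev_V |].
move=> m r _; apply: ev_S; apply: ev_V; exact: vat_e2.
Qed.

Lemma ev_mul renv n i j a b : size renv = n -> vat renv i a -> vat renv j b ->
  ev renv (mul n i j) (a * b).
Proof.
move=> Hn Ha Hb.
have -> : a * b = nrec 0 (fun _ r => r + a) b.
  by elim: b {Hb} => /= [|b <-]; rewrite ?muln0 // mulnS addnC.
apply: ev_Rec; [exact: ev_C | exact: ev_V |].
move=> m r _; apply: ev_add; [by rewrite size_ext Hn | exact: vat_e2 | exact: vat_ext].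
Qed.

Lemma ev_pow2 renv n i a : size renv = n -> vat renv i a -> ev renv (pow2 n i) (2 ^ a).
Proof.
move=> Hn Ha.
have -> : 2 ^ a = nrec 1 (fun _ r => r + r) a.
  by elim: a {Ha} => //= a <-; rewrite expnS mul2n addnn.
apply: ev_Rec; [exact: ev_C | exact: ev_V |].
move=> m r _; apply: ev_add; [by rewrite size_ext Hn | exact: vat_e2 | exact: vat_e2].
Qed.

Lemma ev_pred renv n i a : size renv = n -> vat renv i a -> ev renv (pred n i) a.-1.
Proof.
move=> Hn Ha.
have -> : a.-1 = nrec 0 (fun m _ => m) a by case: a {Ha}.
apply: ev_Rec; [exact: ev_C | exact: ev_V |].
move=> m r _; apply: ev_V; exact: vat_e1.
Qed.

Lemma ev_sub renv n i j a b : size renv = n -> vat renv i a -> vat renv j b ->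
  ev renv (sub n i j) (a - b).
Proof.
move=> Hn Ha Hb.
have -> : a - b = nrec a (fun _ r => r.-1) b by elim: b {Hb} => /= [|b <-]; rewrite ?subn0 ?subnS.
apply: ev_Rec; [exact: ev_V | exact: ev_V |].
move=> m r _; apply: ev_pred; [by rewrite size_ext Hn | exact: vat_e2].
Qed.

Definition c3 (k a b c : nat) : nat := if k is k'.+1 then (if k' is 0 then b else c) else a.

Lemma ev_case3 renv n j k a b c : size renv = n -> vat renv j k ->
  ev renv (case3 n j a b c) (c3 k a b c).
Proof.
move=> Hn Hk.
have -> : c3 k a b c = nrec a (fun m _ => nrec b (fun _ _ => c) m) k by case: k {Hk} => // -[].
apply: ev_Rec; [exact: ev_C | exact: ev_V |].
move=> m r _.
apply: ev_Rec; [exact: ev_C | apply: ev_V; exact: vat_e1 | by []].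
Qed.

Lemma ev_eqb renv n i j a b : size renv = n -> vat renv i a -> vat renv j b ->
  ev renv (eqb n i j) (a == b).
Proof.
move=> Hn Ha Hb.
apply: ev_Let; first exact: ev_sub Hn Ha Hb.
apply: ev_Let.
  apply: (ev_sub (a:=b) (b:=a)); [by rewrite size_rcons Hn | exact: vat_rcons | exact: vat_rcons].
apply: ev_Let; first apply: ev_add.
- by rewrite !size_rcons Hn.
- by apply: vat_rcons; rewrite -Hn; apply: vat_last.
- by rewrite -Hn -(size_rcons renv (O0 (a - b))); apply: vat_last.
apply: ev_conv; last apply: (ev_case3 (k := a - b + (b - a))).
- rewrite /c3; case: (ltngtP a b) => H.
  + case E: (a - b + (b - a)) => [|k]; last by case: k E.
    exfalso; clear -H E; lia.
  + case E: (a - b + (b - a)) => [|k]; last by case: k E.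
    exfalso; clear -H E; lia.
  + by rewrite H subnn.
- by rewrite !size_rcons Hn.
- by apply: vat_lastn; rewrite !size_rcons Hn.
Qed.

Ltac sz := try rewrite /ext; rewrite ?size_rcons; lia.

Lemma vat_ext_last s n m r k : size s = n -> vat (rcons (ext s m r) (O0 k)) n.+2 k.
Proof. by move=> Hn; apply: vat_lastn; rewrite size_ext Hn. Qed.

Lemma ev_bsum renv n j k body (G : nat -> nat) : size renv = n -> vat renv j k ->
  (forall m r, m < k -> ev (ext renv m r) body (G m)) ->
  ev renv (bsum n j body) (\sum_(m < k) G m).
Proof.
move=> Hn Hk HG.
have -> : \sum_(m < k) G m = nrec 0 (fun m r => r + G m) k.
  elim: k {Hk HG} => [|k IH]; first by rewrite big_ord0.
  by rewrite big_ord_recr /= IH.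
apply: ev_Rec; [exact: ev_C | exact: ev_V |].
move=> m r Hm; apply: ev_Let; first exact: HG.
apply: ev_add.
- by sz.
- apply: vat_rcons; exact: vat_e2.
- exact: vat_ext_last.
Qed.

Definition sg n j := case3 n j 0 1 1.
Definition iszero n j := case3 n j 1 0 0.

Lemma ev_sg renv n j k : size renv = n -> vat renv j k -> ev renv (sg n j) (0 < k).
Proof. move=> Hn Hk; apply: ev_conv; last exact: ev_case3 Hn Hk. by case: k {Hk} => // -[]. Qed.
Lemma ev_iszero renv n j k : size renv = n -> vat renv j k -> ev renv (iszero n j) (k == 0).
Proof. move=> Hn Hk; apply: ev_conv; last exact: ev_case3 Hn Hk. by case: k {Hk} => // -[]. Qed.

Definition mod3 n i := NRec (NC 0) (case3 n.+2 n.+1 1 2 0) (NV i).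
Definition div3 n i := NRec (NC 0)
  (NLet (mod3 n.+2 n) (NLet (case3 n.+3 n.+2 0 0 1) (add n.+4 n.+1 n.+3))) (NV i).

Lemma ev_mod3 renv n i k : size renv = n -> vat renv i k -> ev renv (mod3 n i) (k %% 3).
Proof.
move=> Hn Hk.
have -> : k %% 3 = nrec 0 (fun _ r => c3 r 1 2 0) k.
  elim: k {Hk} => [//|k /= <-].
  case E: (k %% 3) => [|[|[|y]]] /=; lia.
apply: ev_Rec; [exact: ev_C | exact: ev_V |].
move=> m r _; apply: ev_case3; [by sz | exact: vat_e2].
Qed.

Lemma ev_div3 renv n i k : size renv = n -> vat renv i k -> ev renv (div3 n i) (k %/ 3).
Proof.
move=> Hn Hk.
have -> : k %/ 3 = nrec 0 (fun m r => r + c3 (m %% 3) 0 0 1) k.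
  elim: k {Hk} => [//|k /= <-].
  case E: (k %% 3) => [|[|[|y]]] /=; lia.
apply: ev_Rec; [exact: ev_C | exact: ev_V |].
move=> m r _; apply: ev_Let; first by apply: ev_mod3; [by sz | exact: vat_e1].
apply: ev_Let; first by apply: ev_case3; [by sz | exact: vat_ext_last].
apply: ev_add.
- by sz.
- do 2 apply: vat_rcons; exact: vat_e2.
- by apply: vat_lastn; sz.
Qed.

Notation code := CodeSeq.code.
Notation decode := CodeSeq.decode.

Lemma code_cat s t : code (s ++ t) = code s + 2 ^ (size s + sumn s) * code t.
Proof.
elim: s => [|a s IH] /=; first by rewrite mul1n.
rewrite IH -!mul2n.
have -> : (size s).+1 + (a + sumn s) = a + (size s + sumn s).+1 by lia.
rewrite [2 ^ (a + _)]expnD expnS; set A := 2 ^ a; set P := 2 ^ (size s + sumn s); nia.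
Qed.

Lemma code_rcons s k : code (rcons s k) = code s + 2 ^ (size s + sumn s) * 2 ^ k.
Proof. by rewrite -cats1 code_cat /= muln1. Qed.

Lemma code0 s : code s = 0 -> s = [::].
Proof. case: s => //= a s /eqP; rewrite muln_eq0 expn_eq0 /=; by case: (code s). Qed.

Lemma code_gt_size s : size s <= code s.
Proof.
elim: s => //= a s IH; apply: leq_trans (_ : (code s).*2.+1 <= _).
  by rewrite ltnS -addnn; lia.
by rewrite leq_pmull // expn_gt0.
Qed.

Lemma rep_code a u : 2 ^ a * (u + u).+1 = code (a :: decode u).
Proof. by rewrite /= CodeSeq.decodeK addnn. Qed.

Lemma rep_inj a u a' u' : 2 ^ a * (u + u).+1 = 2 ^ a' * (u' + u').+1 -> a = a' /\ u = u'.
Proof.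
rewrite !rep_code => /(congr1 (fun c => decode c)); rewrite !CodeSeq.codeK => -[-> E].
split=> //; by rewrite -(CodeSeq.decodeK u) E CodeSeq.decodeK.
Qed.

Definition repb a u c := (2 ^ a * (u + u).+1 == c).
Definition hdF c := \sum_(a < c) a * (0 < \sum_(u < c) repb a u c).
Definition tlF c := \sum_(u < c) u * (0 < \sum_(a < c) repb a u c).

Lemma sum_unique k (P : nat -> bool) x0 : x0 < k -> (forall x, P x = (x == x0)) ->
  \sum_(x < k) x * P x = x0.
Proof.
move=> Hx HP; rewrite (bigD1 (Ordinal Hx)) //= HP eqxx muln1 big1 ?addn0 //.
move=> i Hi; rewrite HP; case: eqP => [E|]; last by rewrite muln0.
by move: Hi; rewrite -val_eqE /= E eqxx.
Qed.

Lemma decode_cons c : 0 < c -> exists a s, decode c = a :: s /\ c = 2 ^ a * (code s + code s).+1.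
Proof.
move=> Hc; case E: (decode c) => [|a s].
  by move: (CodeSeq.decodeK c); rewrite E /= => H; rewrite -H in Hc.
exists a, s; split=> //; by rewrite -(CodeSeq.decodeK c) E /= addnn.
Qed.

Lemma hdtl_ok c : hdF c = head 0 (decode c) /\ tlF c = code (behead (decode c)).
Proof.
case: (posnP c) => [->|Hc]; first by rewrite /hdF /tlF !big_ord0.
have [a [s [Ed Ec]]] := decode_cons Hc.
have Ha : a < c.
  by have := CodeSeq.ltn_code (a :: s); rewrite /= -addnn -Ec => /andP[].
have Hu : code s < c.
  rewrite Ec; apply: leq_trans (_ : (code s + code s).+1 <= _); first lia.
  by rewrite leq_pmull // expn_gt0.
rewrite Ed /=; split.
- apply: (sum_unique (P := fun x => 0 < \sum_(u < c) repb x u c)) => // x; apply/idP/idP.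
    case/posnP: (\sum_(u < c) repb x u c) => // H _.
    move: H; apply: contraTT => Hx; rewrite big1 // => u _.
    rewrite /repb; case: eqP => // E; move: Ec; rewrite -{1}E => /rep_inj [E2 _].
    by rewrite E2 eqxx in Hx.
  move/eqP=> ->; rewrite (bigD1 (Ordinal Hu)) //= /repb.
  by have -> : (2 ^ a * (code s + code s).+1 == c) by rewrite -Ec.
- apply: (sum_unique (P := fun x => 0 < \sum_(a < c) repb a x c)) => // x; apply/idP/idP.
    case/posnP: (\sum_(a < c) repb a x c) => // H _.
    move: H; apply: contraTT => Hx; rewrite big1 // => u _.
    rewrite /repb; case: eqP => // E; move: Ec; rewrite -{1}E => /rep_inj [_ E2].
    by rewrite E2 eqxx in Hx.
  move/eqP=> ->; rewrite (bigD1 (Ordinal Ha)) //= /repb.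
  by have -> : (2 ^ a * (code s + code s).+1 == c) by rewrite -Ec.
Qed.

Ltac vt := try rewrite /ext;
  lazymatch goal with
  | |- vat (rcons _ _) _ _ =>
      first [ apply: vat_lastn'; [rewrite ?size_rcons; lia | reflexivity] | apply: vat_rcons; vt ]
  | |- _ => eassumption
  end.
Ltac side := first [ sz | vt ].

Definition repE n a u t := NLet (pow2 n a) (NLet (add n.+1 u u) (NLet (NS (NV n.+1))
  (NLet (mul n.+3 n n.+2) (eqb n.+4 n.+3 t)))).

Lemma ev_rep renv n a u t A U C : size renv = n -> vat renv a A -> vat renv u U -> vat renv t C ->
  ev renv (repE n a u t) (repb A U C).
Proof.
move=> Hn Ha Hu Ht.
apply: ev_Let; first by apply: ev_pow2; side.
apply: ev_Let; first by apply: ev_add; side.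
apply: ev_Let; first by apply: ev_S; apply: ev_V; side.
apply: ev_Let; first by apply: ev_mul; side.
by apply: ev_eqb; side.
Qed.

Definition hdE n t := bsum n t (NLet (bsum n.+2 t (repE n.+4 n n.+2 t))
  (NLet (sg n.+3 n.+2) (mul n.+4 n n.+3))).
Definition tlE n t := bsum n t (NLet (bsum n.+2 t (repE n.+4 n.+2 n t))
  (NLet (sg n.+3 n.+2) (mul n.+4 n n.+3))).

Lemma ev_hd renv n t c : size renv = n -> vat renv t c -> ev renv (hdE n t) (hdF c).
Proof.
move=> Hn Ht; apply: (ev_bsum (G := fun a => a * (0 < \sum_(u < c) repb a u c))) => // a r _.
apply: ev_Let.
  apply: (ev_bsum (G := fun u => repb a u c)); [sz | vt |].
  move=> u r' _; apply: ev_rep; side.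
apply: ev_Let; first by apply: ev_sg; side.
by apply: ev_mul; side.
Qed.

Lemma ev_tl renv n t c : size renv = n -> vat renv t c -> ev renv (tlE n t) (tlF c).
Proof.
move=> Hn Ht; apply: (ev_bsum (G := fun u => u * (0 < \sum_(a < c) repb a u c))) => // u r _.
apply: ev_Let.
  apply: (ev_bsum (G := fun a => repb a u c)); [sz | vt |].
  move=> a r' _; apply: ev_rep; side.
apply: ev_Let; first by apply: ev_sg; side.
by apply: ev_mul; side.
Qed.

Definition fat (renv : seq obj) l g := nth (O0 0) renv l = O1 g.
Lemma fat_rcons s l g v : fat s l g -> fat (rcons s v) l g.
Proof.
rewrite /fat nth_rcons; case: ltnP => // H; rewrite nth_default //.
Qed.
Ltac ft := try rewrite /ext; repeat apply: fat_rcons; eassumption.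

Definition SigE n lx j := NRec (NC 0) (NLet (NApp lx (NV n)) (NS (add n.+3 n.+1 n.+2))) (NV j).
Definition TmE n lx j := NRec (NC 0) (NLet (SigE n.+2 lx n) (NLet (pow2 n.+3 n.+2)
  (NLet (NApp lx (NV n)) (NLet (pow2 (n+5) n.+4) (NLet (mul (n+6) n.+3 (n+5))
  (add (n+7) n.+1 (n+6))))))) (NV j).
Definition mkchk n lx ci := NLet (NS (NV ci))
  (NLet (bsum n.+1 n (NLet (TmE n.+3 lx n.+1) (eqb n.+4 n.+3 ci))) (sg n.+2 n.+1)).

Lemma ev_Sig renv n lx j g k : size renv = n -> fat renv lx g -> vat renv j k ->
  ev renv (SigE n lx j) (size (mkseq g k) + sumn (mkseq g k)).
Proof.
move=> Hn Hg Hk.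
have -> : size (mkseq g k) + sumn (mkseq g k) = nrec 0 (fun m r => (r + g m).+1) k.
  elim: k {Hk} => [//|k IH]; rewrite nrecS -IH.
  by rewrite mkseqS size_rcons -cats1 sumn_cat /= !size_mkseq; lia.
apply: ev_Rec; [exact: ev_C | exact: ev_V |] => m r _.
apply: ev_Let; first by apply: ev_App; [ft | apply: ev_V; vt].
by apply: ev_S; apply: ev_add; side.
Qed.

Lemma ev_Tm renv n lx j g k : size renv = n -> fat renv lx g -> vat renv j k ->
  ev renv (TmE n lx j) (code (mkseq g k)).
Proof.
move=> Hn Hg Hk.
have -> : code (mkseq g k) = nrec 0 (fun m r => r + 2 ^ (size (mkseq g m) + sumn (mkseq g m)) * 2 ^ (g m)) k.
  elim: k {Hk} => [//|k IH]; rewrite nrecS -IH.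
  by rewrite mkseqS code_rcons.
apply: ev_Rec; [exact: ev_C | exact: ev_V |] => m r _.
apply: ev_Let; first by apply: ev_Sig; [sz | ft | vt].
apply: ev_Let; first by apply: ev_pow2; side.
apply: ev_Let; first by apply: ev_App; [ft | apply: ev_V; vt].
apply: ev_Let; first by apply: ev_pow2; side.
apply: ev_Let; first by apply: ev_mul; side.
by apply: ev_add; side.
Qed.

Lemma mkchk_val g C :
  (0 < \sum_(q < C.+1) (code (mkseq g q) == C)) = (decode C == mkseq g (size (decode C))).
Proof.
apply/idP/eqP.
  move=> H; case: (pickP (fun q : 'I_C.+1 => code (mkseq g q) == C)) => [q /eqP Hq | Hnone].
    by rewrite -Hq CodeSeq.codeK size_mkseq.
  by rewrite big1 in H => // q _; rewrite Hnone.
move=> E; have Hq : size (decode C) < C.+1.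
  by rewrite ltnS -{2}(CodeSeq.decodeK C) code_gt_size.
by rewrite (bigD1 (Ordinal Hq)) //= -E CodeSeq.decodeK eqxx.
Qed.

Lemma ev_mkchk renv n lx ci g C : size renv = n -> fat renv lx g -> vat renv ci C ->
  ev renv (mkchk n lx ci) (decode C == mkseq g (size (decode C))).
Proof.
move=> Hn Hg Hc; rewrite -mkchk_val.
apply: ev_Let; first by apply: ev_S; apply: ev_V; vt.
apply: ev_Let.
  apply: (ev_bsum (G := fun q => code (mkseq g q) == C)); [sz | vt |].
  move=> q r _; apply: ev_Let; first by apply: ev_Tm; [sz | ft | vt].
  by apply: ev_eqb; side.
by apply: ev_sg; side.
Qed.

Definition testE (k : kind) lx ci n :=
  match k with
  | KN => NLet (iszero n ci) (NLet (hdE n.+1 ci) (NLet (eqb n.+2 lx n.+1)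
            (NLet (add n.+3 n n.+2) (sg n.+4 n.+3))))
  | _ => mkchk n lx ci
  end.

Definition condE k lx t n :=
  NLet (hdE n t) (NLet (iszero n.+1 t) (NLet (testE k lx n n.+2)
    (NLet (add n.+3 n.+1 n.+2) (sg n.+4 n.+3)))).

Definition testv (o : obj) (C : nat) : bool :=
  match o with
  | O0 a => (C == 0) || (a == hdF C)
  | O1 g => decode C == mkseq g (size (decode C))
  | O2 _ => false
  end.

Lemma ev_test renv n k lx ci o C : size renv = n -> vat renv ci C -> lx < size renv ->
  nth (O0 0) renv lx = o -> in_kind k o ->
  ev renv (testE k lx ci n) (testv o C).
Proof.
move=> Hn Hc Hl Ho; case: k; case: o Ho => [a|g|F] Ho //= Hk; try by case: Hk.
- have Ha : vat renv lx a.
    by rewrite /vat (set_nth_default (O0 0)).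
  apply: ev_Let; first by apply: ev_iszero; side.
  apply: ev_Let; first by apply: ev_hd; side.
  apply: ev_Let; first by apply: ev_eqb; side.
  apply: ev_Let; first by apply: ev_add; side.
  apply: ev_conv; last by apply: ev_sg; side.
  by case: (C == 0); case: (a == _).
- by apply: ev_mkchk.
- by apply: ev_mkchk.
Qed.

Definition condv (o : obj) (T : nat) : bool := (T == 0) || testv o (hdF T).

Lemma ev_cond renv n k lx t o T : size renv = n -> vat renv t T -> lx < size renv ->
  nth (O0 0) renv lx = o -> in_kind k o ->
  ev renv (condE k lx t n) (condv o T).
Proof.
move=> Hn Ht Hl Ho Hk.
apply: ev_Let; first by apply: ev_hd; side.
apply: ev_Let; first by apply: ev_iszero; side.
apply: ev_Let.
  apply: ev_test; [sz | vt | rewrite !size_rcons; lia | | exact: Hk].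
  by rewrite !nth_rcons !size_rcons Hl (ltn_trans Hl) ?(ltn_trans Hl (ltnSn _)).
apply: ev_Let; first by apply: ev_add; side.
apply: ev_conv; last by apply: ev_sg; side.
by rewrite /condv; case: (T == 0); case: testv.
Qed.

Fixpoint lrest (ks : seq kind) lx n t acc :=
  match ks with
  | [::] => NV acc
  | k :: ks' => NLet (condE k lx t n) (NLet (mul n.+1 acc n)
       (NLet (tlE n.+2 t) (lrest ks' lx.-1 (n + 3) n.+2 n.+1)))
  end.

Fixpoint allv (xs : seq obj) (T : nat) : bool :=
  if xs is o :: xs' then condv o T && allv xs' (tlF T) else true.

Lemma ev_lrest ks xs renv n lx t acc T A :
  size renv = n -> vat renv t T -> vat renv acc A -> in_space ks xs ->
  size xs <= lx.+1 -> lx < size renv ->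
  (forall j, j < size xs -> nth (O0 0) renv (lx - j) = nth (O0 0) xs j) ->
  ev renv (lrest ks lx n t acc) (A * allv xs T).
Proof.
elim: ks xs renv n lx t acc T A => [|k ks IH] [|o xs] renv n lx t acc T A //=.
  by move=> _ _ Ha _ _ _ _; rewrite muln1; apply: ev_V.
move=> Hn Ht Ha [Hk Hs] Hsz Hl Hx.
apply: ev_Let.
  apply: (ev_cond (o := o)) Hn Ht Hl _ Hk.
  by have := Hx 0 (ltn0Sn _); rewrite subn0.
apply: ev_Let; first by apply: ev_mul; side.
apply: ev_Let; first by apply: ev_tl; side.
apply: ev_conv; last apply: (IH xs _ _ _ _ _ (tlF T) (A * condv o T)) => //.
- by rewrite -mulnA mulnb.
- sz.
- vt.
- vt.
- lia.
- rewrite !size_rcons; lia.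
move=> j Hj; rewrite !nth_rcons !size_rcons.
have -> : lx.-1 - j = lx - j.+1 by lia.
have H1 : lx - j.+1 < size renv by lia.
rewrite H1 (ltn_trans H1) ?(ltn_trans H1 (ltnSn _)) //.
exact: (Hx j.+1).
Qed.

Definition Pc (s : seq nat) (o : obj) : Prop :=
  match o with
  | O0 n => s = [::] \/ n = head 0 s
  | O1 g => s = mkseq g (size s)
  | O2 _ => False
  end.

Lemma hdF_code L : hdF (code L) = head 0 L.
Proof. by rewrite (proj1 (hdtl_ok _)) CodeSeq.codeK. Qed.
Lemma tlF_code L : tlF (code L) = code (behead L).
Proof. by rewrite (proj2 (hdtl_ok _)) CodeSeq.codeK. Qed.

Lemma code_eq0 L : (code L == 0) = (L == [::]).
Proof. apply/eqP/eqP => [/code0 //|-> //]. Qed.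

Lemma decode_nil C : (decode C == [::]) = (C == 0).
Proof.
apply/eqP/eqP => [H|-> //]; by rewrite -(CodeSeq.decodeK C) H.
Qed.

Lemma testv_ok o C : testv o C <-> Pc (decode C) o.
Proof.
case: o => [a|g|F] /=.
- rewrite -(CodeSeq.decodeK C) hdF_code CodeSeq.codeK code_eq0.
  split; first by case/orP => /eqP; auto.
  by case=> ->; rewrite ?eqxx ?orbT.
- by split => /eqP.
- by [].
Qed.

Lemma condv_ok o L : condv o (code L) <-> (0 < size L -> Pc (decode (head 0 L)) o).
Proof.
rewrite /condv code_eq0 hdF_code; case: L => [|a L] /=; first by split.
by rewrite testv_ok; split => // H; apply: H.
Qed.

Lemma allv_ok xs L : allv xs (code L) <->
  forall i, i < size L -> i < size xs -> Pc (decode (nth 0 L i)) (nth (O0 0) xs i).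
Proof.
elim: xs L => [|o xs IH] L /=; first by split.
rewrite tlF_code; split.
  case/andP => /condv_ok H1 /IH H2 [|i] Hi Hx /=.
    by move: Hi H1 {H2}; case: L => //= a L _; apply.
  by move: Hi H2 {H1}; case: L => //= a L Hi H2; apply: H2.
move=> H; apply/andP; split.
  apply/condv_ok; move: H; case: L => //= a L H _; exact: (H 0).
apply/IH => i Hi Hx; move: H Hi; case: L => //= a L H Hi; exact: (H i.+1).
Qed.

Lemma allv_basic x c : allv x c <-> basic_set c x.
Proof.
rewrite -(CodeSeq.decodeK c) allv_ok /basic_set /sequncode CodeSeq.codeK size_map.
split=> H i Hi Hx; move: (H i Hi Hx); rewrite (nth_map 0) // /Pc;
  by case: (nth (O0 0) x i).
Qed.

Definition consE n h t := NLet (pow2 n h) (NLet (add n.+1 t t) (NLet (NS (NV n.+1)) (mul n.+3 n n.+2))).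

Lemma ev_cons renv n h t H L : size renv = n -> vat renv h H -> vat renv t (code L) ->
  ev renv (consE n h t) (code (H :: L)).
Proof.
move=> Hn Hh Ht.
apply: ev_Let; first by apply: ev_pow2; side.
apply: ev_Let; first by apply: ev_add; side.
apply: ev_Let; first by apply: ev_S; apply: ev_V; side.
apply: ev_conv; last by apply: ev_mul; side.
by rewrite /= addnn.
Qed.

(* code [:: 3; y; code [:: 1; y]] where y is at level n.-1 *)
Definition smnE n := NLet (NC 0) (NLet (consE n.+1 n.-1 n) (NLet (NC 1)
  (NLet (consE n.+3 n.+2 n.+1) (NLet (consE n.+4 n.+3 n) (NLet (consE (n + 5) n.-1 n.+4)
  (NLet (NC 3) (consE (n + 7) (n + 6) (n + 5)))))))).

Lemma ev_smn renv n y : size renv = n -> ev (rcons renv (O0 y)) (smnE n.+1) (i4 y (iconst y)).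
Proof.
move=> Hn0.
have Hn : size (rcons renv (O0 y)) = n.+1 by rewrite size_rcons Hn0.
have Hy : vat (rcons renv (O0 y)) n y by rewrite -Hn0; apply: vat_last.
apply: ev_Let; first exact: ev_C.
apply: ev_Let; first by apply: (ev_cons (L := [::])); side.
apply: ev_Let; first exact: ev_C.
apply: ev_Let; first by apply: (ev_cons (L := [:: y])); side.
apply: ev_Let; first by apply: (ev_cons (L := [::])); side.
apply: ev_Let; first by apply: (ev_cons (L := [:: code [:: 1; y]])); side.
apply: ev_Let; first exact: ev_C.
by apply: (ev_cons (L := [:: y; code [:: 1; y]])); side.
Qed.

Definition leafE (X : space) := let K := size X in
  NLet (NApp K (NV (K + 3))) (NLet (div3 (K + 7) (K + 6))
    (NLet (NC 1) (lrest X K.-1 (K + 9) (K + 7) (K + 8)))).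
Definition selE K b0 b1 b2 :=
  NLet (NApp K (NV (K + 3))) (NLet (mod3 (K + 7) (K + 6)) (case3 (K + 8) (K + 7) b0 b1 b2)).
Definition c1E K := NLet (pow2 (K + 7) 0) (add (K + 8) 1 (K + 7)).
Definition b1call K := irot 4 (K + 2) (i4 (i4 (imove (K + 4) (i9 (K + 4)))
  (cmp (K + 7) (c1E K))) (cmp (K + 6) (NS (NV 0)))).
Definition b1 K := i4 (cmp (K + 7) (case3 (K + 7) (K + 6) 1 0 0)) (b1call K).
Definition w2E K := NS (add (K + 7) 0 4).
Definition c2E K := NLet (pow2 (K + 8) 0) (NLet (pow2 (K + 9) 4)
  (NLet (mul (K + 10) (K + 8) (K + 9)) (add (K + 11) 1 (K + 10)))).
Definition e1 K := irot 6 (K + 1) (imove (K + 1) (i4 (i4 (imove (K + 5) (i9 (K + 4)))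
  (cmp (K + 8) (c2E K))) (cmp (K + 7) (w2E K)))).
Definition b2 K := imove 4 (i8 (e1 K)).
Definition kbody (X : space) := let K := size X in
  i4 (i9 (K + 6)) (cmp (K + 6) (selE K (cmp (K + 6) (leafE X)) (b1 K) (b2 K))).
Definition dprog (X : space) := let K := size X in
  i4 (i4 (i9 (K + 6)) (iconst (kbody X))) (cmp (K + 5) (smnE (K + 5))).
Definition Qprog X := i4 (dprog X) (iconst (dprog X)).
Definition mainprog X :=
  i4 (i4 (i4 (i9 (size X + 4)) (iconst (Qprog X))) (iconst 0)) (iconst 0).

Lemma ev_ok' renv t v xs n : ev renv t v -> xs = rev renv -> size renv = n ->
  Comp (cmp n t) xs v.
Proof. by move=> H -> <-; exact: ev_ok. Qed.

Lemma rec_ok X L n : size L = size X + 4 ->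
  Comp (kbody X) (O0 (Qprog X) :: O0 (dprog X) :: L) n -> Comp (Qprog X) L n.
Proof.
move=> HL H; apply: c_4; first exact: c_const.
apply: c_4.
  have -> : size X + 5 = (size X + 4).+1 by lia.
  apply: (ev_ok' (renv := rcons (rev L) (O0 (dprog X)))).
  - apply: ev_smn; by rewrite size_rev HL.
  - by rewrite rev_rcons revK.
  - by rewrite size_rcons size_rev HL addnS.
apply: c_4; first exact: c_const.
apply: c_9' H; rewrite /= HL; lia.
Qed.

Definition chi (P : Prop) : nat := if excluded_middle_informative P then 1 else 0.
Lemma chi_b (b : bool) (P : Prop) : (b <-> P) -> chi P = b.
Proof.
rewrite /chi => H; case: excluded_middle_informative => HP; case: b H => H //.
- by have := proj2 H HP.
- by exfalso; apply: HP; apply H.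
Qed.
Lemma chi_not P : chi (~ P) = c3 (chi P) 1 0 0.
Proof. rewrite /chi; do 2 case: excluded_middle_informative => //; tauto. Qed.
Lemma chi1 (P : Prop) : P -> chi P = 1.
Proof. by rewrite /chi; case: excluded_middle_informative. Qed.
Lemma chi0 (P : Prop) : ~ P -> chi P = 0.
Proof. by rewrite /chi; case: excluded_middle_informative. Qed.

Lemma suslin_chi (P : seq nat -> Prop) :
  SuslinS (fun m => chi (P (decode m))) = chi (exists h, forall n, P (fbar h n)).
Proof.
rewrite /SuslinS; case: excluded_middle_informative => H.
  symmetry; apply: chi0 => -[h Hh]; case: (H h) => n.
  by rewrite /seqcode CodeSeq.codeK chi1.
symmetry; apply: chi1.
apply: Classical_Prop.NNPP => Hn; apply: H => h.
apply: Classical_Prop.NNPP => Hh; apply: Hn; exists h => n.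
apply: Classical_Prop.NNPP => Hp; apply: Hh; exists n.
by rewrite /seqcode CodeSeq.codeK chi0.
Qed.

Lemma nth_rcons_lt (T : Type) (d : T) s v i : i < size s -> nth d (rcons s v) i = nth d s i.
Proof. by move=> H; rewrite nth_rcons H. Qed.

Lemma in_space_size X x : in_space X x -> size x = size X.
Proof. elim: X x => [|k X IH] [|o x] //= [_ H]; by rewrite (IH _ H). Qed.

Lemma vat_RE x ys j k : nth (O1 (fun _ => 0)) ys j = O0 k -> vat (rev x ++ ys) (size x + j) k.
Proof. by rewrite /vat nth_cat size_rev ltnNge leq_addr /= addKn. Qed.
Lemma fat_RE x ys j g : nth (O0 0) ys j = O1 g -> fat (rev x ++ ys) (size x + j) g.
Proof. by rewrite /fat nth_cat size_rev ltnNge leq_addr /= addKn. Qed.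
Lemma fat_RE0 x ys g : nth (O0 0) ys 0 = O1 g -> fat (rev x ++ ys) (size x) g.
Proof. by move=> H; rewrite -[size x]addn0; apply: fat_RE. Qed.

Definition Env X c w f x :=
  [:: O0 (Qprog X), O0 (dprog X), O0 c, O0 w, O2 SuslinS, O1 f & x].
Definition REnv X c w f x :=
  rev x ++ [:: O1 f; O2 SuslinS; O0 w; O0 c; O0 (dprog X); O0 (Qprog X)].

Lemma Env_rev X c w f x : Env X c w f x = rev (REnv X c w f x).
Proof. by rewrite /REnv rev_cat revK. Qed.
Lemma REnv_size X c w f x : size (REnv X c w f x) = size x + 6.
Proof. by rewrite /REnv size_cat size_rev. Qed.

Lemma body_ok X c w f x r : size x = size X ->
  Comp (c3 (f c %% 3) (cmp (size X + 6) (leafE X)) (b1 (size X)) (b2 (size X)))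
       (Env X c w f x) r ->
  Comp (kbody X) (Env X c w f x) r.
Proof.
move=> HK H; rewrite -HK in H; rewrite /kbody; cbv zeta; rewrite -HK.
apply: c_4.
  apply: (ev_ok' (renv := REnv X c w f x)); last by rewrite REnv_size.
  2: exact: Env_rev.
  have Hs := REnv_size X c w f x.
  apply: ev_Let; first by apply: ev_App; [exact: fat_RE0 | apply: ev_V; exact: vat_RE].
  apply: ev_Let; first by apply: ev_mod3; side.
  by apply: ev_case3; side.
by apply: c_9' H; rewrite /Env /=; lia.
Qed.

Lemma leaf_ok X c w f x : in_space X x ->
  Comp (cmp (size X + 6) (leafE X)) (Env X c w f x) (chi (basic_set (f c %/ 3) x)).
Proof.
move=> Hx; have HK := in_space_size Hx.
rewrite /leafE; cbv zeta; rewrite -HK.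
apply: (ev_ok' (renv := REnv X c w f x)); last by rewrite REnv_size.
2: exact: Env_rev.
have Hs := REnv_size X c w f x.
apply: ev_Let; first by apply: ev_App; [exact: fat_RE0 | apply: ev_V; exact: vat_RE].
apply: ev_Let; first by apply: ev_div3; side.
apply: ev_Let; first exact: ev_C.
apply: ev_conv; last apply: (ev_lrest (xs := x) (T := f c %/ 3) (A := 1)).
- rewrite mul1n; symmetry; apply: chi_b; exact: allv_basic.
- sz.
- vt.
- vt.
- exact: Hx.
- lia.
- rewrite !size_rcons; lia.
move=> j Hj.
have H1 : (size x).-1 - j < size x by lia.
rewrite !nth_rcons_lt ?size_rcons ?Hs; try lia.
rewrite /REnv nth_cat size_rev H1 nth_rev //.
congr nth; lia.
Qed.

Lemma compl_ok X c w f x r : in_space X x ->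
  Comp (Qprog X) [:: O0 (c + 2 ^ w), O0 w.+1, O2 SuslinS, O1 f & x] r ->
  Comp (b1 (size X)) (Env X c w f x) (c3 r 1 0 0).
Proof.
move=> Hx HQ; have HK := in_space_size Hx.
rewrite /b1 /b1call -HK.
apply: c_4.
  have -> : size x + 2 = size [:: O2 SuslinS, O1 f & x] by rewrite /= addn2.
  apply: (c_rot (P := [:: O0 (Qprog X); O0 (dprog X); O0 c; O0 w])).
  set T := [:: O2 SuslinS, O1 f & x].
  set renv1 := [:: O0 w; O0 c; O0 (dprog X); O0 (Qprog X)] ++ rev T.
  have Hs1 : size renv1 = size x + 6 by rewrite size_cat size_rev /=; lia.
  apply: c_4.
    apply: (ev_ok' (renv := renv1)); last exact: Hs1.
      by apply: ev_S; apply: ev_V; rewrite /vat /renv1.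
    by rewrite rev_cat revK.
  apply: c_4.
    apply: (ev_ok' (renv := rcons renv1 (O0 w.+1))).
    - apply: ev_Let; first by apply: ev_pow2; [sz | apply: vat_rcons; rewrite /vat /renv1].
      by apply: ev_add; [sz | do 2 apply: vat_rcons; rewrite /vat /renv1 | vt].
    - by rewrite rev_rcons rev_cat revK.
    - rewrite size_rcons Hs1; lia.
  apply: (c_move_cat (pre := [:: O0 (c + 2 ^ w), O0 w.+1 & T])); first by rewrite /= /T /=; lia.
  by apply: c_9 HQ; rewrite /T /=; lia.
have Hs := REnv_size X c w f x.
apply: (ev_ok' (renv := rcons (REnv X c w f x) (O0 r))).
- apply: ev_case3; [rewrite size_rcons; lia | apply: vat_lastn'; [lia | done]].
- by rewrite rev_rcons -Env_rev.
- rewrite size_rcons; lia.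
Qed.

Lemma aop_ok X c w f x (g : nat -> nat) : in_space X x ->
  (forall m, Comp (Qprog X) [:: O0 (c + 2 ^ w * 2 ^ m), O0 (w + m).+1, O2 SuslinS, O1 f & x] (g m)) ->
  Comp (b2 (size X)) (Env X c w f x) (SuslinS g).
Proof.
move=> Hx HQ; have HK := in_space_size Hx.
rewrite /b2 /e1 -HK.
apply: (c_move_cat (pre := [:: O0 (Qprog X); O0 (dprog X); O0 c; O0 w])) => //.
apply: c_8 => m.
have -> : size x + 1 = size (O1 f :: x) by rewrite /= addn1.
apply: (c_rot (P := [:: O2 SuslinS; O0 m; O0 (Qprog X); O0 (dprog X); O0 c; O0 w])).
apply: (c_move_cat (pre := O1 f :: x)) => //.
set T := [:: O2 SuslinS, O1 f & x].
set renv1 := [:: O0 w; O0 c; O0 (dprog X); O0 (Qprog X); O0 m] ++ rev T.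
have Hs1 : size renv1 = size x + 7 by rewrite size_cat size_rev /=; lia.
apply: c_4.
  apply: (ev_ok' (renv := renv1)); last exact: Hs1.
    apply: ev_S; apply: ev_add => //; by rewrite /vat /renv1.
  by rewrite rev_cat revK.
apply: c_4.
  apply: (ev_ok' (renv := rcons renv1 (O0 (w + m).+1))).
  - apply: ev_Let; first by apply: ev_pow2; [sz | apply: vat_rcons; rewrite /vat /renv1].
    apply: ev_Let; first by apply: ev_pow2; [sz | do 2 apply: vat_rcons; rewrite /vat /renv1].
    apply: ev_Let; first by apply: ev_mul; side.
    by apply: ev_add; [sz | do 4 apply: vat_rcons; rewrite /vat /renv1 | vt].
  - by rewrite rev_rcons rev_cat revK.
  - rewrite size_rcons Hs1; lia.
have E : forall L, x ++ [:: O0 m, O0 (Qprog X) & L] = (x ++ [:: O0 m]) ++ O0 (Qprog X) :: L.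
  by move=> L; rewrite -catA.
rewrite /= E.
apply: (c_move_cat (pre := [:: O0 (c + 2 ^ w * 2 ^ m), O0 (w + m).+1, O2 SuslinS, O1 f & x ++ [:: O0 m]])).
  by rewrite /= size_cat /=; lia.
rewrite /= -catA.
have := c_9 (m := size x + 4) ([:: O0 m; O0 (dprog X); O0 c; O0 w]) _ (HQ m).
by apply; rewrite /=; lia.
Qed.

Lemma main_ind X f s P : Interp f s P -> forall x, in_space X x ->
  Comp (Qprog X) [:: O0 (seqcode s), O0 (size s + sumn s), O2 SuslinS, O1 f & x] (chi (P x)).
Proof.
elim => {s P} [s Hv | s Q Hv _ IH | s P Hv _ IH] x Hx; have HK := in_space_size Hx;
  (apply: rec_ok; first by rewrite /= HK; lia); apply: body_ok => //; rewrite Hv /c3;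
  cbv beta iota.
- exact: leaf_ok Hx.
- rewrite chi_not; apply: compl_ok => //.
  have := IH x Hx; rewrite /seqcode code_rcons expn0 muln1 size_rcons -cats1 sumn_cat /=.
  by rewrite !addn0 addSn.
- rewrite (_ : chi (Aop P x) = SuslinS (fun m => chi (P (decode m) x))); last first.
    by rewrite (suslin_chi (fun t => P t x)).
  apply: aop_ok => // m.
  have := IH (decode m) x Hx.
  rewrite /seqcode code_rcons CodeSeq.decodeK size_rcons -cats1 sumn_cat /=.
  by rewrite addn0 addSn addnA.
Qed.

Theorem mainTheorem3 :
  forall X : space, exists e : nat,
    forall (f : nat -> nat) (Pf : seq obj -> Prop), Interp f [::] Pf ->
    forall x : seq obj, in_space X x ->
      (Pf x -> Comp e (O2 SuslinS :: O1 f :: x) 1) /\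
      (~ Pf x -> Comp e (O2 SuslinS :: O1 f :: x) 0).
Proof.
move=> X; exists (mainprog X) => f Pf HI x Hx.
have HK := in_space_size Hx.
have H : Comp (mainprog X) [:: O2 SuslinS, O1 f & x] (chi (Pf x)).
  apply: c_4; first exact: c_const.
  apply: c_4; first exact: c_const.
  apply: c_4; first exact: c_const.
  apply: c_9'; last exact: (main_ind HI Hx).
  by rewrite /= HK; lia.
by split => HP; [rewrite -(chi1 HP) | rewrite -(chi0 HP)].
Qed.
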